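(* For positive integers $c,r$ define the graphs $Z_{c,r}$ and $Y_{c,r}$ as follows. $Z_{c,r}$ has vertex set $\{z_{i,j}:1\le i\le c,\ 1\le j\le r\}$, and for $i<i'$, $z_{i,j}z_{i',j'}$ is an edge iff (1) $i$ is odd, $i'=i+1$ and $j>j'$; or (2) $i$ is even, $i'=i+1$ and $j\le j'$; or (3) $i$ is even, $i'$ is odd and $i'\ge i+3$. $Y_{c,r}$ has vertex set $\{y_{i,j}:1\le i\le c,\ 1\le j\le r\}$, and $y_{i,j}y_{i',j'}$ is an edge iff (1) $i$ is odd, $i'=i+1$ and $j\ge j'$; or (2) $i$ is even, $i'=i+1$ and $j<j'$; or (3) $i$ is even, $i'$ is odd and $i'\ge i+3$; or (4) $i$ is odd, $i'=i-1$ and $j=1$. Then for every $n\ge1$: $Z_{2n,2n}$ contains $Y_{n,n}$ as an induced subgraph; $Y_{2n,2n}$ contains $Z_{n,n}$ as an induced subgraph; and moreover $Z_{n,n}$ can be embedded as an induced subgraph in $Y_{2n,2n}$ using none of the vertices $y_{i,1}$ ($1\le i\le 2n$) of the bottom row.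
   Context: In these grids, $i$ indexes columns (left to right) and $j$ indexes rows, row $1$ being the bottom row. *)

(* Defs.v *)
From mathcomp Require Import all_boot.
Set Implicit Arguments. Unset Strict Implicit. Unset Printing Implicit Defensive.

(* Vertices of Z_{c,r} / Y_{c,r}: pairs (i, j) : 'I_c * 'I_r, standing for
   z_{i+1, j+1} (resp. y_{i+1, j+1}); i = column, j = row (row 1 = bottom). *)

Definition Zcond (i j i' j' : nat) : bool :=
  [|| [&& odd i, i' == i.+1 & j' < j],
      [&& ~~ odd i, i' == i.+1 & j <= j'] |
      [&& ~~ odd i, odd i' & i + 3 <= i'] ].

Definition Ycond (i j i' j' : nat) : bool :=
  [|| [&& odd i, i' == i.+1 & j' <= j],
      [&& ~~ odd i, i' == i.+1 & j < j'],
      [&& ~~ odd i, odd i' & i + 3 <= i'] |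
      [&& odd i, i'.+1 == i & j == 1] ].

Definition Zadj (c r : nat) (u v : 'I_c * 'I_r) : bool :=
  Zcond u.1.+1 u.2.+1 v.1.+1 v.2.+1 || Zcond v.1.+1 v.2.+1 u.1.+1 u.2.+1.

Definition Yadj (c r : nat) (u v : 'I_c * 'I_r) : bool :=
  Ycond u.1.+1 u.2.+1 v.1.+1 v.2.+1 || Ycond v.1.+1 v.2.+1 u.1.+1 u.2.+1.

Definition induced_embedding (V W : Type) (eH : V -> V -> bool)
    (eG : W -> W -> bool) (f : V -> W) : Prop :=
  injective f /\ forall u v, eH u v = eG (f u) (f v).

(* Main.v *)
Require Import Defs.
From mathcomp Require Import all_boot zify.

Definition fc1 (n a b : nat) := if odd a then a else if 0 < b then a else if a == 0 then 0 else a + 2.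
Definition fr1 n a b := if 0 < b then b + n - a - 1 else if odd a then 0 else if a == 0 then 1 else 0.

Lemma key1 n a b a' b' : a < n -> b < n -> a' < n -> b' < n ->
  (Ycond a.+1 b.+1 a'.+1 b'.+1 || Ycond a'.+1 b'.+1 a.+1 b.+1) =
  (Zcond (fc1 n a b).+1 (fr1 n a b).+1 (fc1 n a' b').+1 (fr1 n a' b').+1 ||
   Zcond (fc1 n a' b').+1 (fr1 n a' b').+1 (fc1 n a b).+1 (fr1 n a b).+1).
Proof.
move=> Ha Hb Ha' Hb'; rewrite /fc1 /fr1.
case H1: (odd a); case H2: (0 < b); case H3: (a == 0);
case H4: (odd a'); case H5: (0 < b'); case H6: (a' == 0);
rewrite /Ycond /Zcond /= ?addn2 /= ?H1 ?H4 /=;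
try (move/eqP: H3 => H3; subst a; discriminate);
try (move/eqP: H6 => H6; subst a'; discriminate).
all: apply/idP/idP; lia.
Qed.

Lemma inj1 n a b a' b' : a < n -> b < n -> a' < n -> b' < n ->
  fc1 n a b = fc1 n a' b' -> fr1 n a b = fr1 n a' b' -> a = a' /\ b = b'.
Proof.
move=> Ha Hb Ha' Hb'; rewrite /fc1 /fr1.
case H1: (odd a); case H2: (0 < b); case H3: (a == 0);
case H4: (odd a'); case H5: (0 < b'); case H6: (a' == 0);
try (move/eqP: H3 => H3; subst a; discriminate);
try (move/eqP: H6 => H6; subst a'; discriminate);
move=> E1 E2; try subst a'; try rewrite H1 in H4; try discriminate; lia.
Qed.

Lemma bnd1 n a b : a < n -> b < n -> fc1 n a b < 2 * n /\ fr1 n a b < 2 * n.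
Proof.
move=> Ha Hb; rewrite /fc1 /fr1.
case H1: (odd a); case H2: (0 < b); case H3: (a == 0);
try (move/eqP: H3 => H3; subst a; discriminate); lia.
Qed.

Lemma key2 a b a' b' :
  (Zcond a.+1 b.+1 a'.+1 b'.+1 || Zcond a'.+1 b'.+1 a.+1 b.+1) =
  (Ycond a.+1 (a + b + 1).+1 a'.+1 (a' + b' + 1).+1 ||
   Ycond a'.+1 (a' + b' + 1).+1 a.+1 (a + b + 1).+1).
Proof.
rewrite /Ycond /Zcond /=.
case H1: (odd a); case H4: (odd a'); rewrite /=; apply/idP/idP; lia.
Qed.

Definition ordm {m} (H : 0 < m) (k : nat) : 'I_m := Ordinal (ltn_pmod k H).

Theorem lemma10 (n : nat) : 0 < n ->
  (exists f : 'I_n * 'I_n -> 'I_(2 * n) * 'I_(2 * n),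
      induced_embedding (@Yadj n n) (@Zadj (2 * n) (2 * n)) f) /\
  (exists f : 'I_n * 'I_n -> 'I_(2 * n) * 'I_(2 * n),
      induced_embedding (@Zadj n n) (@Yadj (2 * n) (2 * n)) f) /\
  (exists f : 'I_n * 'I_n -> 'I_(2 * n) * 'I_(2 * n),
      induced_embedding (@Zadj n n) (@Yadj (2 * n) (2 * n)) f /\
      forall u, nat_of_ord (f u).2 != 0).
Proof.
move=> n0.
have H2 : 0 < 2 * n by lia.
have E3 : exists f : 'I_n * 'I_n -> 'I_(2 * n) * 'I_(2 * n),
      induced_embedding (@Zadj n n) (@Yadj (2 * n) (2 * n)) f /\
      forall u, nat_of_ord (f u).2 != 0.
  exists (fun u : 'I_n * 'I_n => (ordm H2 u.1, ordm H2 (u.1 + u.2 + 1))).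
  split; [split|].
  - move=> [[a Ha] [b Hb]] [[a' Ha'] [b' Hb']] [] /=.
    rewrite !modn_small; try lia.
    move=> E1 E2; congr (_, _); apply: val_inj => /=; lia.
  - move=> [[a Ha] [b Hb]] [[a' Ha'] [b' Hb']]; rewrite /Zadj /Yadj /=.
    rewrite !modn_small; try lia. exact: key2.
  - move=> [[a Ha] [b Hb]] /=; rewrite modn_small; lia.
split; last by split=> //; case: E3 => f [Hf _]; exists f.
exists (fun u : 'I_n * 'I_n => (ordm H2 (fc1 n u.1 u.2), ordm H2 (fr1 n u.1 u.2))).
split.
- move=> [[a Ha] [b Hb]] [[a' Ha'] [b' Hb']] [] /=.
  have [B1 B2] := bnd1 n a b Ha Hb; have [B3 B4] := bnd1 n a' b' Ha' Hb'.
  rewrite !modn_small // => E1 E2.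
  have [? ?] := inj1 n a b a' b' Ha Hb Ha' Hb' E1 E2.
  by congr (_, _); apply: val_inj.
- move=> [[a Ha] [b Hb]] [[a' Ha'] [b' Hb']]; rewrite /Zadj /Yadj /=.
  have [B1 B2] := bnd1 n a b Ha Hb; have [B3 B4] := bnd1 n a' b' Ha' Hb'.
  rewrite !modn_small //. exact: key1 n a b a' b' Ha Hb Ha' Hb'.
Qed.
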